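(* Let $A\subseteq\mathcal{R}$ be outer measurable and let $(I_n)_{n\ge1}$ be pairwise disjoint intervals in $\mathcal{R}$ with $\lim_{n\to\infty}l(I_n)=0$. Then $A\setminus\bigcup_{n=1}^\infty I_n$ is outer measurable, the limit $\lim_{k\to\infty}M_u\big(A\setminus\bigcup_{n=1}^k I_n\big)$ exists in $\mathcal{R}$, and $$M_u\Big(A\setminus\bigcup_{n=1}^\infty I_n\Big)=\lim_{k\to\infty}M_u\Big(A\setminus\bigcup_{n=1}^k I_n\Big).$$
   Context: $\mathcal{R}$ denotes the Levi-Civita field: functions $x:\mathbb{Q}\to\mathbb{R}$ with left-finite support, with componentwise addition and formal power series multiplication, ordered by $x>0$ iff $x\ne0$ and $x[\min\operatorname{supp}x]>0$; it is a non-Archimedean ordered field extension of $\mathbb{R}$, Cauchy complete in the order topology, in which all limits and series are taken (a series $\sum a_n$ converges iff $a_n\to0$). An interval is a set $[a,b],[a,b),(a,b]$ or $(a,b)$ with $a<b$ in $\mathcal{R}$, of length $l=b-a$. A cover of $A\subseteq\mathcal{R}$ is a sequence of intervals $(S_n)_{n\ge1}$ with $A\subseteq\bigcup_n S_n$ and $\sum_n l(S_n)$ convergent in $\mathcal{R}$. $A$ is called outer measurable if the infimum $\inf\{\sum_n l(S_n): (S_n)\text{ a cover of }A\}$ exists in $\mathcal{R}$; this infimum is then called the outer measure $M_u(A)$. (For an outer measurable $A$ and finitely many intervals, $A\setminus\bigcup_{n=1}^k I_n$ is outer measurable.) *)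

(* Defs.v *)
From mathcomp Require Import all_boot all_order all_algebra.
From mathcomp Require Import all_classical all_reals.
Set Implicit Arguments. Unset Strict Implicit. Unset Printing Implicit Defensive.
Import Order.TTheory GRing.Theory Num.Theory.
Local Open Scope ring_scope.
Local Open Scope classical_set_scope.

(* The Levi-Civita field over the reals R (any realType):              *)
(* functions x : rat -> R with left-finite support, i.e. for every q   *)

Definition left_finite (R : realType) (x : rat -> R) : Prop :=
  forall q : rat, finite_set [set t : rat | t < q /\ x t != 0].

Record LC (R : realType) := MkLC {
  lc_fun :> rat -> R ;
  lc_lf : left_finite lc_fun }.

Section LCops.
Variable R : realType.

Lemma left_finite0 : left_finite (fun _ : rat => (0 : R)).
Proof.
move=> q; apply: sub_finite_set (finite_set0 rat).
by move=> t [_]; rewrite eqxx.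
Qed.

Lemma left_finiteD (x y : LC R) : left_finite (fun t => x t + y t).
Proof.
move=> q; apply: (@sub_finite_set _ _
  ([set t | t < q /\ x t != 0] `|` [set t | t < q /\ y t != 0])).
  move=> t [tq]; have [x0|x0] := eqVneq (x t) 0.
    by rewrite x0 add0r => ?; right.
  by move=> _; left.
by rewrite finite_setU; split; apply: lc_lf.
Qed.

Lemma left_finiteN (x : LC R) : left_finite (fun t => - x t).
Proof.
move=> q; apply: (@sub_finite_set _ _ [set t | t < q /\ x t != 0]).
  by move=> t [tq]; rewrite oppr_eq0.
exact: lc_lf.
Qed.

Definition lc_zero : LC R := MkLC left_finite0.
Definition lc_add (x y : LC R) : LC R := MkLC (left_finiteD x y).
Definition lc_opp (x : LC R) : LC R := MkLC (left_finiteN x).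
Definition lc_sub (x y : LC R) : LC R := lc_add x (lc_opp y).

Definition lc_pos (x : LC R) : Prop :=
  exists t : rat, 0 < x t /\ forall s : rat, s < t -> x s = 0.

Definition lc_lt (x y : LC R) : Prop := lc_pos (lc_sub y x).
Definition lc_le (x y : LC R) : Prop := lc_lt x y \/ x = y.

(* Convergence of a sequence in the order topology of the field
   (the field has no endpoints, so open intervals (a,b) form a basis). *)
Definition lc_cvg (u : nat -> LC R) (L : LC R) : Prop :=
  forall a b : LC R, lc_lt a L -> lc_lt L b ->
    exists N : nat, forall n : nat, (N <= n)%N -> lc_lt a (u n) /\ lc_lt (u n) b.

Fixpoint lc_psum (u : nat -> LC R) (N : nat) : LC R :=
  match N with
  | 0%N => lc_zero
  | N'.+1 => lc_add (lc_psum u N') (u N')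
  end.

Definition lc_series_to (u : nat -> LC R) (s : LC R) : Prop :=
  lc_cvg (lc_psum u) s.

Record lc_interval := MkItv {
  itv_a : LC R ;
  itv_b : LC R ;
  itv_lclosed : bool ;
  itv_rclosed : bool ;
  itv_lt : lc_lt itv_a itv_b }.

Definition itv_set (I : lc_interval) : set (LC R) :=
  [set x | (if itv_lclosed I then lc_le (itv_a I) x else lc_lt (itv_a I) x) /\
           (if itv_rclosed I then lc_le x (itv_b I) else lc_lt x (itv_b I))].

Definition itv_len (I : lc_interval) : LC R := lc_sub (itv_b I) (itv_a I).

Definition cover_with_sum (A : set (LC R)) (S : nat -> lc_interval) (s : LC R) :=
  A `<=` \bigcup_n itv_set (S n) /\ lc_series_to (fun n => itv_len (S n)) s.

Definition is_infimum (E : set (LC R)) (m : LC R) : Prop :=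
  (forall s, E s -> lc_le m s) /\
  (forall m', (forall s, E s -> lc_le m' s) -> lc_le m' m).

Definition Mu_is (A : set (LC R)) (m : LC R) : Prop :=
  is_infimum [set s | exists S, cover_with_sum A S s] m.

Definition outer_measurable (A : set (LC R)) : Prop := exists m, Mu_is A m.

End LCops.

(* Main.v *)
From HB Require Import structures.
Require Import Defs.
From mathcomp Require Import all_boot all_order all_algebra.
From mathcomp Require Import all_classical all_reals.
From mathcomp Require Import lra.
Set Implicit Arguments. Unset Strict Implicit. Unset Printing Implicit Defensive.
Import Order.TTheory GRing.Theory Num.Theory.
Local Open Scope ring_scope.
Local Open Scope order_scope.
Local Open Scope classical_set_scope.



Section LCth.
Variable R : realType.
Local Notation LC := (LC R).

Lemma lc_ext (x y : LC) : (forall t, x t = y t) -> x = y.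
Proof.
case: x => f fP; case: y => g gP /= H.
have fg : f = g by apply: funext.
subst g; congr MkLC; exact: Prop_irrelevance.
Qed.

HB.instance Definition _ := gen_eqMixin LC.
HB.instance Definition _ := gen_choiceMixin LC.

Lemma lc_addA : associative (@lc_add R).
Proof. by move=> x y z; apply: lc_ext => t /=; rewrite addrA. Qed.
Lemma lc_addC : commutative (@lc_add R).
Proof. by move=> x y; apply: lc_ext => t /=; rewrite addrC. Qed.
Lemma lc_add0 : left_id (lc_zero R) (@lc_add R).
Proof. by move=> x; apply: lc_ext => t /=; rewrite add0r. Qed.
Lemma lc_addN : left_inverse (lc_zero R) (@lc_opp R) (@lc_add R).
Proof. by move=> x; apply: lc_ext => t /=; rewrite addNr. Qed.

HB.instance Definition _ := GRing.isZmodule.Build LC lc_addA lc_addC lc_add0 lc_addN.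

Lemma addE (x y : LC) t : (x + y) t = x t + y t. Proof. by []. Qed.
Lemma oppE (x : LC) t : (- x) t = - x t. Proof. by []. Qed.
Lemma subE (x y : LC) t : (x - y) t = x t - y t. Proof. by []. Qed.
Lemma zeroE t : (0 : LC) t = 0. Proof. by []. Qed.

Definition lex (x y : LC) := exists t, (x t < y t)%R /\ forall s, s < t -> x s = y s.

Lemma lc_ltE (x y : LC) : lc_lt x y <-> lex x y.
Proof.
rewrite /lc_lt /lc_pos; split => -[t [H1 H2]]; exists t; split.
- by move: H1; rewrite /= subr_gt0.
- by move=> s /H2 /= /eqP; rewrite subr_eq0 => /eqP.
- by rewrite /= subr_gt0.
- by move=> s /H2 /= ->; rewrite subrr.
Qed.

Lemma lex_irr x : ~ lex x x.
Proof. by case=> t []; rewrite ltxx. Qed.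

Lemma lex_trans x y z : lex x y -> lex y z -> lex x z.
Proof.
move=> [t1 [l1 e1]] [t2 [l2 e2]].
case: (ltgtP t1 t2) => [h|h|h].
- exists t1; split; first by rewrite -(e2 _ h).
  by move=> s st; rewrite e1 // e2 //; apply: lt_trans st h.
- exists t2; split; first by rewrite (e1 _ h).
  by move=> s st; rewrite e1 ?e2 //; apply: lt_trans st h.
- subst t2; exists t1; split; first exact: lt_trans l1 l2.
  by move=> s st; rewrite e1 ?e2.
Qed.

Lemma seq_min (s : seq rat) x : x \in s -> exists m, m \in s /\ forall y, y \in s -> m <= y.
Proof.
elim: s x => // a s IH x; rewrite inE => /orP [/eqP _|xs].
  case: s IH => [|b s] IH.
    by exists a; split; rewrite ?mem_head // => y; rewrite inE => /eqP ->.
  have [m [ms mm]] := IH b (mem_head _ _).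
  case: (leP a m) => am.
    exists a; split; first exact: mem_head.
    by move=> y; rewrite inE => /orP [/eqP ->//|/mm]; apply: le_trans.
  exists m; split; first by rewrite inE ms orbT.
  by move=> y; rewrite inE => /orP [/eqP ->|/mm//]; apply: ltW.
have [m [ms mm]] := IH x xs.
case: (leP a m) => am.
  exists a; split; first exact: mem_head.
  by move=> y; rewrite inE => /orP [/eqP ->//|/mm]; apply: le_trans.
exists m; split; first by rewrite inE ms orbT.
by move=> y; rewrite inE => /orP [/eqP ->|/mm//]; apply: ltW.
Qed.

Lemma lex_total x y : x <> y -> lex x y \/ lex y x.
Proof.
move=> xy.
have [t0 xt0] : exists t, x t != y t.
  case: (pselect (exists t, x t != y t)) => // H; exfalso; apply: xy.
  apply: lc_ext => t; apply/eqP; case: eqP => // ne; exfalso; apply: H; exists t; exact/eqP.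
pose D := [set t | t < t0 + 1 /\ x t != y t].
have fD : finite_set D.
  apply: (@sub_finite_set _ _ ([set t | t < t0 + 1 /\ x t != 0] `|` [set t | t < t0 + 1 /\ y t != 0])).
    move=> t [tq ne]; have [x0|x0] := eqVneq (x t) 0.
      by right; split => //; move: ne; rewrite x0 eq_sym.
    by left.
  by rewrite finite_setU; split; apply: lc_lf.
have [s Ds] := (finite_seqP D).1 fD.
have t0s : t0 \in s.
  have : D t0 by split => //; rewrite ltrDl.
  by rewrite Ds.
have [m [ms mm]] := seq_min t0s.
have Dm : D m by rewrite Ds.
have before : forall u, u < m -> x u = y u.
  move=> u um; apply/eqP; case: eqP => // /eqP ne.
  have Du : D u.
    split => //; apply: lt_trans um _; by case: Dm.
  have us : u \in s by move: Du; rewrite Ds.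
  by have := mm u us; rewrite leNgt um.
case: Dm => _ ne.
case: (ltgtP (x m) (y m)) => h.
- by left; exists m.
- by right; exists m; split => // u /before ->.
- by move/eqP: ne.
Qed.

Definition lcltb (x y : LC) : bool := `[< lex x y >].
Definition lcleb (x y : LC) : bool := (x == y) || lcltb x y.

Lemma lcleb_def x y : lcleb x y = (x == y) || lcltb x y. Proof. by []. Qed.
Lemma lcltb_irr : irreflexive lcltb.
Proof. by move=> x; apply/asboolP/lex_irr. Qed.
Lemma lcltb_trans : transitive lcltb.
Proof. by move=> y x z /asboolP h1 /asboolP h2; apply/asboolP; apply: lex_trans h1 h2. Qed.

HB.instance Definition _ := Order.LtLe_isPOrder.Build (Order.Disp tt tt) LC lcleb_def lcltb_irr lcltb_trans.

Lemma lcleb_total : total lcleb.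
Proof.
move=> x y; rewrite /lcleb; case: (eqVneq x y) => [->|/eqP ne]; first by rewrite ?eqxx.
by case: (lex_total ne) => h; apply/orP; [left|right]; apply/orP; right; apply/asboolP.
Qed.

HB.instance Definition _ := Order.POrder_isTotal.Build (Order.Disp tt tt) LC lcleb_total.

Lemma ltlexP (x y : LC) : x < y <-> lex x y.
Proof. by split => [/asboolP|h]; [|apply/asboolP]. Qed.

Lemma lc_ltP (x y : LC) : lc_lt x y <-> x < y.
Proof. by rewrite lc_ltE ltlexP. Qed.

Lemma lc_leP (x y : LC) : lc_le x y <-> x <= y.
Proof.
rewrite /lc_le lc_ltP le_eqVlt; split => [[h|->]|/orP [/eqP ->|h]]; by [rewrite h orbT|rewrite eqxx|right|left].
Qed.

Lemma lc_ltD2r (x y z : LC) : (x + z < y + z) = (x < y).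
Proof.
apply/idP/idP => /ltlexP [t [h1 h2]]; apply/ltlexP; exists t; split.
- by move: h1; rewrite !addE ltrD2r.
- by move=> s /h2; rewrite !addE => /addIr.
- by rewrite !addE ltrD2r.
- by move=> s /h2; rewrite !addE => ->.
Qed.

Lemma lc_leD2r (x y z : LC) : (x + z <= y + z) = (x <= y).
Proof. by rewrite !leNgt lc_ltD2r. Qed.

Lemma lc_leD2l (x y z : LC) : (z + x <= z + y) = (x <= y).
Proof. by rewrite ![z + _]addrC lc_leD2r. Qed.

Lemma lc_ltD2l (x y z : LC) : (z + x < z + y) = (x < y).
Proof. by rewrite ![z + _]addrC lc_ltD2r. Qed.

Lemma lc_leD (x y x' y' : LC) : x <= y -> x' <= y' -> x + x' <= y + y'.
Proof.
move=> h h'; apply: (@le_trans _ _ (y + x')); first by rewrite lc_leD2r.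
by rewrite lc_leD2l.
Qed.

Lemma lc_subr_gt0 (x y : LC) : ((0:LC) < y - x) = (x < y).
Proof. by rewrite -(lc_ltD2r _ _ x) add0r subrK. Qed.

Lemma lc_subr_ge0 (x y : LC) : ((0:LC) <= y - x) = (x <= y).
Proof. by rewrite -(lc_leD2r _ _ x) add0r subrK. Qed.

Lemma lc_ler_subl (x y z : LC) : (x - z <= y) = (x <= y + z).
Proof. by rewrite -(lc_leD2r _ _ z) subrK. Qed.

Lemma lc_ler_subr (x y z : LC) : (x <= y - z) = (x + z <= y).
Proof. by rewrite -(lc_leD2r _ _ z) subrK. Qed.

Definition agr (q : rat) (x y : LC) := forall t, t <= q -> x t = y t.

Lemma agr_refl q x : agr q x x. Proof. by []. Qed.
Lemma agr_sym q x y : agr q x y -> agr q y x.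
Proof. by move=> h t /h ->. Qed.
Lemma agr_trans q x y z : agr q x y -> agr q y z -> agr q x z.
Proof. by move=> h1 h2 t tq; rewrite h1 // h2. Qed.
Lemma agr_mon q q' x y : q' <= q -> agr q x y -> agr q' x y.
Proof. by move=> qq h t tq; apply: h; apply: le_trans tq qq. Qed.
Lemma agrD q x y x' y' : agr q x y -> agr q x' y' -> agr q (x + x') (y + y').
Proof. by move=> h h' t tq; rewrite !addE h // h'. Qed.
Lemma agrN q x y : agr q x y -> agr q (- x) (- y).
Proof. by move=> h t tq; rewrite !oppE h. Qed.
Lemma agrB q x y x' y' : agr q x y -> agr q x' y' -> agr q (x - x') (y - y').
Proof. by move=> h h'; apply: agrD => //; apply: agrN. Qed.

Lemma lex_pre (x y : LC) q : x <= y ->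
  agr q x y \/ exists t, t <= q /\ (x t < y t)%R /\ forall s, s < t -> x s = y s.
Proof.
rewrite le_eqVlt => /orP [/eqP ->|/ltlexP [t [h1 h2]]]; first by left.
case: (leP t q) => tq; first by right; exists t.
by left => s sq; apply: h2; apply: le_lt_trans sq tq.
Qed.

Lemma lex_of_agr (x y x' y' : LC) q t : t <= q -> agr q x x' -> agr q y y' ->
  (x t < y t)%R -> (forall s, s < t -> x s = y s) -> x' < y'.
Proof.
move=> tq hx hy h1 h2; apply/ltlexP; exists t; split.
  by rewrite -hx // -hy.
move=> s st; have sq : s <= q by apply: ltW; apply: lt_le_trans st tq.
by rewrite -hx // -hy // h2.
Qed.

Lemma sand (a b c : LC) q : a <= b -> b <= c -> agr q a c -> agr q b a.
Proof.
move=> ab bc ac.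
case: (lex_pre q ab) => [h|[t1 [t1q [l1 e1]]]]; first exact: agr_sym.
exfalso.
case: (lex_pre q bc) => [h|[t2 [t2q [l2 e2]]]].
  by move: l1; rewrite h // -ac // ltxx.
case: (ltgtP t1 t2) => t12.
- by move: l1; rewrite e2 // -ac // ltxx.
- by have := l2; rewrite -e1 // -ac // ltxx.
- subst t2; have := lt_trans l1 l2; by rewrite -ac // ltxx.
Qed.

Definition monof (q : rat) : rat -> R := fun t => if t == q then 1%R else 0%R.
Lemma monof_lf q : left_finite (monof q).
Proof.
move=> q'; apply: (@sub_finite_set _ _ [set q]); last exact: finite_set1.
by move=> t [_]; rewrite /monof; case: (t =P q) => [->//|_]; rewrite eqxx.
Qed.
Definition mono q : LC := MkLC (monof_lf q).

Lemma mono_gt0 q : (0:LC) < mono q.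
Proof.
apply/ltlexP; exists q; split; first by rewrite /= /monof eqxx ltr01.
by move=> s sq; rewrite /= /monof; case: eqP => // ses; move: sq; rewrite ses ltxx.
Qed.

Lemma agr_mono q q' : q' < q -> agr q' (mono q) 0.
Proof.
move=> qq t tq; rewrite /= /monof; case: eqP => // tE.
by move: qq; rewrite -tE ltNge tq.
Qed.

Lemma lc_ltDr (x e : LC) : (0:LC) < e -> x < x + e.
Proof. by move=> h; rewrite -{1}(addr0 x) lc_ltD2l. Qed.
Lemma lc_ltBr (x e : LC) : (0:LC) < e -> x - e < x.
Proof. by move=> h; rewrite -(lc_ltD2r _ _ e) subrK lc_ltDr. Qed.

Definition cv (u : nat -> LC) (L : LC) :=
  forall q, exists N, forall n, (N <= n)%N -> agr q (u n) L.

Lemma cvP u L : lc_cvg u L <-> cv u L.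
Proof.
split.
- move=> h q.
  have hq : q < q + 1 by rewrite ltrDl.
  have [N HN] := h (L - mono (q + 1)) (L + mono (q + 1))
     ((lc_ltP _ _).2 (lc_ltBr _ (mono_gt0 _))) ((lc_ltP _ _).2 (lc_ltDr _ (mono_gt0 _))).
  exists N => n /HN [/lc_ltP h1 /lc_ltP h2].
  have am : agr q (L - mono (q + 1)) L.
    by move=> t tq; rewrite subE (agr_mono hq) // subr0.
  have bm : agr q (L + mono (q + 1)) L.
    by move=> t tq; rewrite addE (agr_mono hq) // addr0.
  apply: (agr_trans (sand (ltW h1) (ltW h2) _) am).
  exact: agr_trans am (agr_sym bm).
- move=> h a b /lc_ltP /ltlexP [t1 [l1 e1]] /lc_ltP /ltlexP [t2 [l2 e2]].
  have [N HN] := h (Order.max t1 t2).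
  exists N => n /HN hn; split; apply/lc_ltP.
  + apply: (@lex_of_agr a L a (u n) (Order.max t1 t2) t1) => //.
      by rewrite le_max lexx.
    exact: agr_sym.
  + apply: (@lex_of_agr L b (u n) b (Order.max t1 t2) t2) => //.
      by rewrite le_max lexx orbT.
    exact: agr_sym.
Qed.

Lemma cv_unique u L M : cv u L -> cv u M -> L = M.
Proof.
move=> hL hM; apply: lc_ext => t.
have [N1 H1] := hL t; have [N2 H2] := hM t.
rewrite -(H1 (maxn N1 N2)) ?leq_maxl // (H2 (maxn N1 N2)) ?leq_maxr //.
Qed.

Lemma cvD u v L M : cv u L -> cv v M -> cv (fun n => u n + v n) (L + M).
Proof.
move=> hu hv q; have [N1 H1] := hu q; have [N2 H2] := hv q.
exists (maxn N1 N2) => n; rewrite geq_max => /andP [n1 n2].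
by apply: agrD; [apply: H1|apply: H2].
Qed.

Lemma cvN u L : cv u L -> cv (fun n => - u n) (- L).
Proof. by move=> hu q; have [N H] := hu q; exists N => n /H; apply: agrN. Qed.

Lemma cv_const L : cv (fun _ => L) L.
Proof. by move=> q; exists 0%N. Qed.

Lemma cv_shift u L k : cv u L -> cv (fun n => u (n + k)%N) L.
Proof. by move=> h q; have [N HN] := h q; exists N => n nN; apply: HN; apply: leq_trans nN (leq_addr _ _). Qed.

Lemma cv_le u v L M : cv u L -> cv v M -> (forall n, u n <= v n) -> L <= M.
Proof.
move=> hu hv uv; rewrite leNgt; apply/negP => /ltlexP [t [l e]].
have [N1 H1] := hu t; have [N2 H2] := hv t.
have := uv (maxn N1 N2); rewrite leNgt => /negP; apply.
apply: (@lex_of_agr M L _ _ t t) => //.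
  by apply: agr_sym; apply: H2; rewrite leq_maxr.
by apply: agr_sym; apply: H1; rewrite leq_maxl.
Qed.

Lemma cv_sand u v w L : cv u L -> cv w L -> (forall n, u n <= v n /\ v n <= w n) -> cv v L.
Proof.
move=> hu hw uvw q; have [N1 H1] := hu q; have [N2 H2] := hw q.
exists (maxn N1 N2) => n; rewrite geq_max => /andP [n1 n2].
have [a b] := uvw n.
apply: agr_trans (sand a b _) (H1 _ n1).
exact: agr_trans (H1 _ n1) (agr_sym (H2 _ n2)).
Qed.

Lemma lim_ex (u : nat -> LC) :
  (forall q, exists N, forall n m, (N <= n)%N -> (N <= m)%N -> agr q (u n) (u m)) ->
  exists L, cv u L.
Proof.
move=> /choice [Nf HN].
pose Lf := fun t => u (Nf t) t.
have key : forall q t n, t <= q -> (Nf q <= n)%N -> u n t = Lf t.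
  move=> q t n tq nq; rewrite /Lf.
  rewrite (HN q n (Nf q)) // (HN q (Nf q) (maxn (Nf q) (Nf t))) ?leq_maxl //.
  by rewrite (HN t (maxn (Nf q) (Nf t)) (Nf t)) ?leq_maxr.
have lf : left_finite Lf.
  move=> q; apply: (@sub_finite_set _ _ [set t | t < q /\ u (Nf q) t != 0]); last exact: lc_lf.
  by move=> t [tq ne]; split => //; rewrite (key q t (Nf q)) // ltW.
exists (MkLC lf) => q; exists (Nf q) => n nq t tq /=.
exact: key tq nq.
Qed.

End LCth.



Section LCth2.
Variable R : realType.
Local Notation LC := (LC R).

Lemma psumS (u : nat -> LC) n : lc_psum u n.+1 = lc_psum u n + u n.
Proof. by []. Qed.

Lemma psumD (u v : nat -> LC) n : lc_psum (fun k => u k + v k) n = lc_psum u n + lc_psum v n.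
Proof.
elim: n => [|n IH]; first by apply: lc_ext => t /=; rewrite addr0.
by rewrite !psumS IH addrACA.
Qed.

Lemma psum_le (u v : nat -> LC) n : (forall k, u k <= v k) -> lc_psum u n <= lc_psum v n.
Proof. by move=> h; elim: n => [|n IH] //; rewrite !psumS lc_leD. Qed.

Definition ser (u : nat -> LC) s := cv (lc_psum u) s.

Lemma serP u s : lc_series_to u s <-> ser u s.
Proof. exact: cvP. Qed.

Lemma ser_term0 u s : ser u s -> cv u 0.
Proof.
move=> h q; have [N HN] := h q; exists N => n nN t tq.
have := HN _ nN t tq; have := HN _ (leq_trans nN (leqnSn n)) t tq.
move=> e1 e2; have e1' : (lc_psum u n t + u n t)%R = s t := e1.
rewrite zeroE; apply: (@addrI _ (lc_psum u n t)); by rewrite addr0 e1' e2.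
Qed.

Lemma ser_ex u : cv u 0 -> exists s, ser u s.
Proof.
move=> h; apply: lim_ex => q; have [N HN] := h q.
have H : forall n, (N <= n)%N -> agr q (lc_psum u n) (lc_psum u N).
  move=> n; elim: n => [|n IH]; first by rewrite leqn0 => /eqP ->.
  rewrite leq_eqVlt => /orP [/eqP <-//|]; rewrite ltnS => nN.
  move=> t tq; rewrite psumS addE (HN n nN t tq) zeroE addr0; exact: IH.
exists N => n m nN mN; exact: agr_trans (H n nN) (agr_sym (H m mN)).
Qed.

Lemma ser_add u v s s' : ser u s -> ser v s' -> ser (fun k => u k + v k) (s + s').
Proof.
move=> h h'; have := cvD h h'.
by move=> H q; have [N HN] := H q; exists N => n /HN; rewrite psumD.
Qed.

Lemma ser_le u v s s' : (forall n, u n <= v n) -> ser u s -> ser v s' -> s <= s'.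
Proof. by move=> uv h h'; apply: cv_le h h' _ => n; apply: psum_le. Qed.

Lemma psum0 n : lc_psum (fun _ => 0 : LC) n = 0.
Proof. by elim: n => // n IH; rewrite psumS IH addr0. Qed.

Lemma ser0 : ser (fun _ => 0 : LC) 0.
Proof. by move=> q; exists 0%N => n _; rewrite psum0. Qed.

Lemma ser_ge0 (u : nat -> LC) s : (forall n, (0:LC) <= u n) -> ser u s -> (0:LC) <= s.
Proof. by move=> h hs; apply: ser_le h ser0 hs. Qed.

Lemma ser_sand (u v : nat -> LC) s : (forall n, (0:LC) <= u n /\ u n <= v n) -> ser v s -> exists s', ser u s'.
Proof.
move=> h hv; apply: ser_ex; apply: (@cv_sand _ (fun _ => 0) _ v) => //.
  exact: cv_const.
exact: ser_term0 hv.
Qed.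

Lemma ser_unique u s s' : ser u s -> ser u s' -> s = s'.
Proof. exact: cv_unique. Qed.

Definition mrg T (f g : nat -> T) (k : nat) : T := if odd k then g k./2 else f k./2.

Lemma psum_merge (u v : nat -> LC) k :
  lc_psum (mrg u v) k = lc_psum u (uphalf k) + lc_psum v k./2.
Proof.
elim: k => [|k IH]; first by rewrite /= addr0.
rewrite psumS IH /mrg.
have -> : uphalf k.+1 = (k./2).+1 by rewrite uphalfE.
have -> : k.+1./2 = (odd k + k./2)%N by rewrite -uphalfE uphalf_half.
rewrite uphalf_half.
case: (odd k); rewrite /nat_of_bool ?add1n ?add0n ?psumS.
  by rewrite addrA.
by rewrite addrAC.
Qed.

Lemma ser_merge u v s s' : ser u s -> ser v s' -> ser (mrg u v) (s + s').
Proof.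
move=> h h' q; have [N1 H1] := h q; have [N2 H2] := h' q.
exists (maxn N1 N2).*2 => k kN; rewrite psum_merge; apply: agrD.
  apply: H1; rewrite geq_uphalf_double; apply: leq_trans (leqnSn _).
  by apply: leq_trans kN; rewrite leq_double leq_maxl.
apply: H2; rewrite geq_half_double.
by apply: leq_trans kN; rewrite leq_double leq_maxr.
Qed.

End LCth2.



Lemma rat_bound (t : rat) : exists n : nat, t <= n%:R.
Proof.
exists (Num.bound `|t|%R); apply: le_trans (ler_norm t) _.
by apply: ltW; apply: archi_boundP.
Qed.

Section LCth3.
Variable R : realType.
Local Notation LC := (LC R).

Definition truncf (q : rat) (x : LC) : rat -> R := fun t => if t <= q then x t else 0%R.
Lemma truncf_lf q x : left_finite (truncf q x).
Proof.
move=> q'; apply: (@sub_finite_set _ _ [set t | t < q' /\ x t != 0]); last exact: lc_lf.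
by move=> t [tq]; rewrite /truncf; case: ifP => // _; rewrite eqxx.
Qed.
Definition trunc q x : LC := MkLC (truncf_lf q x).

Lemma trunc_le q (x y : LC) : x <= y -> trunc q x <= trunc q y.
Proof.
move=> h; case: (lex_pre q h) => [a|[t [tq [l e]]]].
  suff -> : trunc q x = trunc q y by [].
  by apply: lc_ext => t /=; rewrite /truncf; case: ifP => // /a ->.
apply/ltW/ltlexP; exists t; split; first by rewrite /= /truncf tq.
move=> s st /=; rewrite /truncf; case: ifP => // _; exact: e.
Qed.

Lemma trunc_agr q (x y : LC) : trunc q x = trunc q y -> agr q x y.
Proof.
move=> h t tq; have := congr1 (fun z : LC => z t) h; by rewrite /= /truncf tq.
Qed.
Lemma agr_trunc q (x y : LC) : agr q x y -> trunc q x = trunc q y.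
Proof. by move=> h; apply: lc_ext => t /=; rewrite /truncf; case: ifP => // /h ->. Qed.

Lemma pre_antisym q (x x' y y' : LC) : x <= y' -> y <= x' -> agr q x x' -> agr q y y' -> agr q x y.
Proof.
move=> h1 h2 a1 a2; apply: trunc_agr; apply/le_anti/andP; split.
  by rewrite (agr_trunc a2); apply: trunc_le.
by rewrite (agr_trunc a1); apply: trunc_le.
Qed.

Definition is_inf (E : set LC) m := (forall s, E s -> m <= s) /\
   (forall m', (forall s, E s -> m' <= s) -> m' <= m).

Lemma is_infP E m : is_infimum E m <-> is_inf E m.
Proof.
split => -[h1 h2]; split.
- by move=> s /h1 /lc_leP.
- by move=> m' h; apply/lc_leP; apply: h2 => s /h /lc_leP.
- by move=> s /h1 /lc_leP.
- by move=> m' h; apply/lc_leP; apply: h2 => s /h /lc_leP.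
Qed.

Lemma inf_approx E m : is_inf E m -> forall q, exists s, E s /\ agr q s m.
Proof.
move=> [h1 h2] q.
have hq : q < q + 1 by rewrite ltrDl.
have [s [Es ns]] : exists s, E s /\ ~ (m + mono R (q + 1) <= s).
  case: (pselect (exists s, E s /\ ~ (m + mono R (q + 1) <= s))) => // H; exfalso.
  have : m + mono R (q + 1) <= m.
    apply: h2 => s Es; case: (pselect (m + mono R (q + 1) <= s)) => // ns.
    by exfalso; apply: H; exists s.
  by rewrite leNgt lc_ltDr ?mono_gt0.
exists s; split => //.
have : s < m + mono R (q + 1) by rewrite ltNge; apply/negP.
move=> /ltW h; apply: (sand (h1 _ Es) h).
by move=> t tq; rewrite addE (@agr_mono R _ _ hq) // addr0.
Qed.

Lemma inf_ex (E : set LC) :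
  (forall q, exists l s, (forall s', E s' -> l <= s') /\ E s /\ agr q l s) ->
  exists m, is_inf E m.
Proof.
move=> H.
have /choice [f Hf] : forall n : nat, exists p : LC * LC,
   (forall s', E s' -> p.1 <= s') /\ E p.2 /\ agr n%:R p.1 p.2.
  by move=> n; have [l [s h]] := H n%:R; exists (l, s).
have claim : forall n m, (n <= m)%N -> agr n%:R (f n).1 (f m).1.
  move=> n m nm; have [l1 [e1 a1]] := Hf n; have [l2 [e2 a2]] := Hf m.
  apply: (pre_antisym (l1 _ e2) (l2 _ e1) a1).
  by apply: agr_mon a2; rewrite ler_nat.
have [L hL] : exists L, cv (fun n => (f n).1) L.
  apply: lim_ex => q; have [N hN] := rat_bound q.
  exists N => n m nN mN.
  apply: (agr_mon hN); apply: agr_trans (claim _ _ mN) => //.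
  exact: agr_sym (claim _ _ nN).
have big : forall t : rat, exists n, agr t (f n).1 L /\ agr t (f n).1 (f n).2.
  move=> t; have [N1 h1] := hL t; have [N2 h2] := rat_bound t.
  exists (maxn N1 N2); split; first by apply: h1; rewrite leq_maxl.
  have [_ [_ a]] := Hf (maxn N1 N2); apply: agr_mon a.
  by apply: le_trans h2 _; rewrite ler_nat leq_maxr.
exists L; split.
- move=> s Es; rewrite leNgt; apply/negP => /ltlexP [t [l e]].
  have [n [a1 _]] := big t; have [lb _] := Hf n.
  have := lb _ Es; rewrite leNgt => /negP; apply.
  exact: (@lex_of_agr _ s L s (f n).1 t t (lexx _) (@agr_refl _ _ _) (agr_sym a1) l e).
- move=> m' lb; rewrite leNgt; apply/negP => /ltlexP [t [l e]].
  have [n [a1 a2]] := big t; have [_ [En _]] := Hf n.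
  have := lb _ En; rewrite leNgt => /negP; apply.
  exact: (@lex_of_agr _ L m' _ m' t t (lexx _) (agr_trans (agr_sym a1) a2) (@agr_refl _ _ _) l e).
Qed.

End LCth3.



Section LCth4.
Variable R : realType.
Local Notation LC := (LC R).

Lemma merge_even T (f g : nat -> T) n : mrg f g n.*2 = f n.
Proof. by rewrite /mrg odd_double doubleK. Qed.
Lemma merge_odd T (f g : nat -> T) n : mrg f g n.*2.+1 = g n.
Proof. by rewrite /mrg /= odd_double /= uphalf_double. Qed.

Lemma merge_cover (P Q : nat -> set LC) :
  \bigcup_n P n `|` \bigcup_n Q n `<=` \bigcup_k (mrg P Q k).
Proof.
move=> x [[n _ h]|[n _ h]].
  by exists n.*2 => //; rewrite merge_even.
by exists n.*2.+1 => //; rewrite merge_odd.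
Qed.

Lemma merge_comp T U (h : T -> U) f g : (fun k => h (mrg f g k)) = mrg (h \o f) (h \o g).
Proof. by apply: funext => k; rewrite /mrg; case: odd. Qed.

Definition Sig (X : set LC) := [set s | exists S, cover_with_sum X S s].

Lemma Sig_anti (X Y : set LC) s : X `<=` Y -> Sig Y s -> Sig X s.
Proof. by move=> XY [S [c h]]; exists S; split => //; apply: subset_trans c. Qed.

Lemma Sig_merge (X Y : set LC) x y : Sig X x -> Sig Y y -> Sig (X `|` Y) (x + y).
Proof.
move=> [S [cS hS]] [T [cT hT]]; exists (mrg S T); split.
  move=> z [/cS [n _ h]|/cT [n _ h]].
    by exists n.*2 => //; rewrite merge_even.
  by exists n.*2.+1 => //; rewrite merge_odd.
apply/serP; rewrite (merge_comp (@itv_len R)); apply: ser_merge; exact/serP.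
Qed.

Record gi := Gi { ga : LC; gb : LC; gl : bool; gr : bool }.

Definition gset (g : gi) : set LC := [set x |
  (if gl g then ga g <= x else ga g < x) /\ (if gr g then x <= gb g else x < gb g)].

Definition lenf (a b : LC) : LC := if a < b then b - a else 0.
Definition glen (g : gi) := lenf (ga g) (gb g).

Lemma lenf_ge0 a b : (0 : LC) <= lenf a b.
Proof. by rewrite /lenf; case: ifP => // h; rewrite lc_subr_ge0 ltW. Qed.

Definition hs (c : LC) (hc : bool) : set LC := [set x | if hc then x <= c else x < c].
Definition nhs (c : LC) (hc : bool) : set LC := [set x | if hc then c < x else c <= x].

Lemma nhsP c hc x : nhs c hc x <-> ~ hs c hc x.
Proof.
rewrite /nhs /hs /=; case: hc; split.
- by rewrite ltNge => /negP.
- by move=> h; rewrite ltNge; apply/negP.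
- by rewrite leNgt => /negP.
- by move=> h; rewrite leNgt; apply/negP.
Qed.

Definition gin c hc (g : gi) := Gi (ga g) (if gb g < c then gb g else c) (gl g)
  (if gb g < c then gr g else if c < gb g then hc else gr g && hc).
Definition gout c hc (g : gi) := Gi (if c < ga g then ga g else c) (gb g)
  (if c < ga g then gl g else if ga g < c then ~~ hc else gl g && ~~ hc) (gr g).

Ltac ord := match goal with
 | H: is_true (?a < ?b) |- is_true (?a <= ?b) => exact: ltW H
 | H1: is_true (?a <= ?b), H2: is_true (?b <= ?c) |- is_true (?a <= ?c) => exact: le_trans H1 H2
 | H1: is_true (?a <= ?b), H2: is_true (?b < ?c) |- is_true (?a < ?c) => exact: le_lt_trans H1 H2
 | H1: is_true (?a < ?b), H2: is_true (?b <= ?c) |- is_true (?a < ?c) => exact: lt_le_trans H1 H2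
 | H1: is_true (?a < ?b), H2: is_true (?b < ?c) |- is_true (?a < ?c) => exact: lt_trans H1 H2
 | H1: is_true (?a < ?b), H2: is_true (?b < ?c) |- is_true (?a <= ?c) => exact: ltW (lt_trans H1 H2)
 | H1: is_true (?a <= ?b), H2: is_true (?b < ?c) |- is_true (?a <= ?c) => exact: ltW (le_lt_trans H1 H2)
 | H1: is_true (?a < ?b), H2: is_true (?b <= ?c) |- is_true (?a <= ?c) => exact: ltW (lt_le_trans H1 H2)
 end.

Lemma gin_set c hc g x : gset (gin c hc g) x <-> gset g x /\ hs c hc x.
Proof.
case: g => a b l r; rewrite /gset /gin /hs /=.
case: (ltgtP b c) => h; [| |subst c]; case: l; case: r; case: hc => /=;
  split => [[h1 h2]|[[h1 h2] h3]]; (split; [try split|]) => //; try ord.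
Qed.

Lemma gout_set c hc g x : gset (gout c hc g) x <-> gset g x /\ nhs c hc x.
Proof.
case: g => a b l r; rewrite /gset /gout /nhs /=.
case: (ltgtP c a) => h; [| |subst c]; case: l; case: r; case: hc => /=;
  split => [[h1 h2]|[[h1 h2] h3]]; (split; [try split|]) => //; try ord.
Qed.

Lemma glen_split c hc g : glen (gin c hc g) + glen (gout c hc g) = glen g.
Proof.
case: g => a b l r; rewrite /glen /gin /gout /lenf /=.
have gtF : forall x y : LC, x < y -> (y < x) = false.
  by move=> x y h; apply/negP => h'; apply: (lt_nsym h h').
case: (ltgtP a b) => hab; case: (ltgtP b c) => hbc; case: (ltgtP c a) => hca;
  try subst; rewrite ?ltxx;
  repeat match goal with
   | H : is_true (?x < ?y) |- context [?x < ?y] => rewrite H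
   | H : is_true (?x < ?y) |- context [?y < ?x] => rewrite (gtF _ _ H)
  end; rewrite ?ltxx ?addr0 ?add0r ?subrr //;
  try (match goal with
   | H1 : is_true (?x < ?y), H2 : is_true (?y < ?z), H3 : is_true (?z < ?x) |- _ =>
       exfalso; exact: lt_nsym (lt_trans H1 H2) H3
   | H1 : is_true (?x < ?y), H2 : is_true (?y < ?x) |- _ => exfalso; exact: lt_nsym H1 H2
   end);
  try (by rewrite addrC addrA subrK); try (by rewrite addrA subrK subrr).
Qed.
Definition gcov (X : set LC) (g : nat -> gi) s :=
  X `<=` \bigcup_n gset (g n) /\ ser (fun n => glen (g n)) s.

Definition gi_of (I : lc_interval R) := Gi (itv_a I) (itv_b I) (itv_lclosed I) (itv_rclosed I).

Lemma itv_setE I x : itv_set I x <-> gset (gi_of I) x.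
Proof.
rewrite /itv_set /gset /=; case: (itv_lclosed I); case: (itv_rclosed I);
  rewrite ?lc_leP ?lc_ltP; by [].
Qed.

Lemma itv_lenE I : itv_len I = glen (gi_of I).
Proof.
have h := itv_lt I; move/lc_ltP: h => h.
by rewrite /glen /lenf /= h.
Qed.

Lemma cov_gcov X S s : cover_with_sum X S s -> gcov X (fun n => gi_of (S n)) s.
Proof.
move=> [c h]; split.
  by move=> x /c [n _ hn]; exists n => //; apply/itv_setE.
move/serP: h; congr ser; apply: funext => n; exact: itv_lenE.
Qed.

Lemma gcov_sub X Y g s : X `<=` Y -> gcov Y g s -> gcov X g s.
Proof. by move=> XY [c h]; split => //; apply: subset_trans c. Qed.

Lemma gcov_merge X Y g h x y : gcov X g x -> gcov Y h y -> gcov (X `|` Y) (mrg g h) (x + y).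
Proof.
move=> [cg hg] [ch hh]; split.
  move=> z [/cg [n _ hn]|/ch [n _ hn]].
    by exists n.*2 => //; rewrite merge_even.
  by exists n.*2.+1 => //; rewrite merge_odd.
by rewrite (merge_comp glen); apply: ser_merge.
Qed.

Lemma glen_ge0 g : (0 : LC) <= glen g.
Proof. exact: lenf_ge0. Qed.

Lemma gcov_split X g s c hc : gcov X g s -> exists x y,
  gcov (X `&` hs c hc) (fun n => gin c hc (g n)) x /\
  gcov (X `&` nhs c hc) (fun n => gout c hc (g n)) y /\ x + y = s.
Proof.
move=> [cg hg].
have [x hx] : exists x, ser (fun n => glen (gin c hc (g n))) x.
  apply: ser_sand hg => n; split; first exact: glen_ge0.
  rewrite -(glen_split c hc (g n)) -{1}(addr0 (glen (gin c hc (g n)))) lc_leD2l.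
  exact: glen_ge0.
have [y hy] : exists y, ser (fun n => glen (gout c hc (g n))) y.
  apply: ser_sand hg => n; split; first exact: glen_ge0.
  rewrite -(glen_split c hc (g n)) -{1}(add0r (glen (gout c hc (g n)))) lc_leD2r.
  exact: glen_ge0.
exists x, y; split; [|split].
- split => // z [/cg [n _ hn] hz]; exists n => //; exact/gin_set.
- split => // z [/cg [n _ hn] hz]; exists n => //; exact/gout_set.
- apply: ser_unique hg; have := ser_add hx hy; congr ser.
  by apply: funext => n; rewrite glen_split.
Qed.

Lemma gcov_Sig X g s q : gcov X g s -> exists s', Sig X s' /\ agr q s' s.
Proof.
move=> [cg hg].
pose e n := mono R (q + 1 + n%:R).
have epos : forall n, (0 : LC) < e n by move=> n; exact: mono_gt0.
pose real n : lc_interval R := match pselect (ga (g n) < gb (g n)) with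
 | left h => @MkItv R (ga (g n)) (gb (g n)) (gl (g n)) (gr (g n)) ((lc_ltP _ _).2 h)
 | right _ => @MkItv R (ga (g n)) (ga (g n) + e n) true true
                 ((lc_ltP _ _).2 (lc_ltDr (ga (g n)) (epos n))) end.
pose d n : LC := if pselect (ga (g n) < gb (g n)) then 0 else e n.
have lenE : forall n, itv_len (real n) = glen (g n) + d n.
  move=> n; rewrite /real /d /glen; case: pselect => h; rewrite /itv_len /= /lenf.
    by rewrite h addr0.
  have -> : (ga (g n) < gb (g n)) = false by apply/negP.
  by apply: lc_ext => t /=; rewrite addrAC subrr !add0r.
have dq : forall n, agr q (d n) 0.
  move=> n; rewrite /d; case: pselect => ? //.
  apply: agr_mono; have : (0 <= n%:R :> rat) by rewrite ler0n.
  move=> h; rewrite -Num.Theory.subr_gt0; lra.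
have cvd : cv d 0.
  move=> q'; have [N hN] := rat_bound (q' - q); exists N => n nN.
  rewrite /d; case: pselect => ? //; apply: agr_mono.
  have : (N%:R <= n%:R :> rat) by rewrite ler_nat.
  move=> h; rewrite -Num.Theory.subr_gt0; lra.
have [D hD] := ser_ex cvd.
have dD : agr q D 0.
  have [N hN] := hD q.
  have p0 : forall n, agr q (lc_psum d n) 0.
    elim => [|n IH] //; rewrite psumS -(addr0 0); exact: agrD.
  exact: agr_trans (agr_sym (hN N (leqnn N))) (p0 N).
exists (s + D); split.
  exists real; split.
    move=> x /cg [n _ hn]; exists n => //; move: hn; rewrite /real.
    case: pselect => h; first by move=> hh; apply/itv_setE; exact: hh.
    case: (g n) h => a b l r /= h [h1 h2].
    have ba : b <= a by rewrite leNgt; apply/negP.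
    have xb : x <= b by move: h2; case: (r) => // /ltW.
    have xa : x <= a by apply: le_trans xb ba.
    have ax : a <= x by move: h1; case: (l) => // /ltW.
    rewrite /itv_set /=; split; apply/lc_leP => //.
    by apply: le_trans xa _; apply/ltW/lc_ltDr.
  apply/serP; have := ser_add hg hD; congr ser.
  by apply: funext => n; rewrite lenE.
by rewrite -{2}(addr0 s); apply: agrD.
Qed.


End LCth4.



Section LCth5.
Variable R : realType.
Local Notation LC := (LC R).

Lemma fin_lemma (A : set LC) m (I : lc_interval R) :
  is_inf (Sig A) m -> exists m', is_inf (Sig (A `\` itv_set I)) m'.
Proof.
move=> h; apply: inf_ex => q.
have [s [[S cS] asm]] := inf_approx h q.
have gS := cov_gcov cS.
have [x1 [r [g1 [gQ e1]]]] := gcov_split (itv_a I) (~~ itv_lclosed I) gS.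
have [x2 [x3 [g2 [g3 e2]]]] := gcov_split (itv_b I) (itv_rclosed I) gQ.
have Iset : forall x, itv_set I x <->
   nhs (itv_a I) (~~ itv_lclosed I) x /\ hs (itv_b I) (itv_rclosed I) x.
  move=> x; rewrite itv_setE /gset /nhs /hs /=.
  by case: (itv_lclosed I).
have sub1 : A `&` itv_set I `<=`
    (A `&` nhs (itv_a I) (~~ itv_lclosed I)) `&` hs (itv_b I) (itv_rclosed I).
  by move=> z [Az /Iset [z1 z2]]; split.
have sub2 : A `\` itv_set I `<=` (A `&` hs (itv_a I) (~~ itv_lclosed I)) `|`
    ((A `&` nhs (itv_a I) (~~ itv_lclosed I)) `&` nhs (itv_b I) (itv_rclosed I)).
  move=> z [Az nI]; case: (pselect (hs (itv_a I) (~~ itv_lclosed I) z)) => h1.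
    by left.
  right; split; first by split => //; apply/nhsP.
  by apply/nhsP => h2; apply: nI; apply/Iset; split => //; apply/nhsP.
have [x' [Sx ax]] := gcov_Sig q (gcov_sub sub1 g2).
have [y' [Sy ay]] := gcov_Sig q (gcov_sub sub2 (gcov_merge g1 g3)).
exists (m - x'), y'; split; [|split] => //.
- move=> y'' Sy''.
  have := Sig_merge Sx Sy''.
  have AU : A `<=` (A `&` itv_set I) `|` (A `\` itv_set I).
    by move=> z Az; case: (pselect (itv_set I z)) => hz; [left|right].
  move=> /(Sig_anti AU) /h.1; by rewrite lc_ler_subl addrC.
- apply: agr_trans (agr_sym ay).
  have -> : x1 + x3 = s - x2 by rewrite -e1 -e2 [x2 + x3]addrC addrA addrK.
  exact: agrB (agr_sym asm) ax.
Qed.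

Lemma psum_shift (u : nat -> LC) j n :
  lc_psum (fun k => u (k + j)%N) n = lc_psum u (n + j) - lc_psum u j.
Proof.
elim: n => [|n IH]; first by rewrite /= add0n subrr.
by rewrite psumS IH addSn psumS addrAC.
Qed.

Lemma ser_shift (u : nat -> LC) S j : ser u S -> ser (fun k => u (k + j)%N) (S - lc_psum u j).
Proof.
move=> h q; have [N HN] := h q; exists N => n nN.
rewrite psum_shift; apply: agrB => //; apply: HN.
exact: leq_trans nN (leq_addr _ _).
Qed.

Lemma Ak_step (A : set LC) (F : nat -> set LC) k :
  A `\` \bigcup_(n in [set n : nat | (n <= k.+1)%N]) F n =
  (A `\` \bigcup_(n in [set n : nat | (n <= k)%N]) F n) `\` F k.+1.
Proof.
apply/seteqP; split => x.
- move=> [Ax nU]; split; first split => //.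
    by move=> [n nk Fn]; apply: nU; exists n => //; rewrite /= (leq_trans nk).
  by move=> Fk; apply: nU; exists k.+1 => /=.
- move=> [[Ax nU] nF]; split => // -[n nk Fn].
  move: nk; rewrite /= leq_eqVlt => /orP [/eqP nE|nk].
    by apply: nF; rewrite -nE.
  by apply: nU; exists n.
Qed.

Lemma Ak_0 (A : set LC) (F : nat -> set LC) :
  A `\` \bigcup_(n in [set n : nat | (n <= 0)%N]) F n = A `\` F 0%N.
Proof.
apply/seteqP; split => x [Ax nU]; split => //.
  by move=> F0; apply: nU; exists 0%N.
by move=> [n /= n0 Fn]; apply: nU; move: n0; rewrite leqn0 => /eqP <-.
Qed.

End LCth5.

Local Close Scope order_scope.
Local Close Scope ring_scope.
Unset Implicit Arguments.

Theorem lemma3p1 (R : realType) (A : set (LC R)) (I : nat -> lc_interval R) :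
  outer_measurable A ->
  (forall n m : nat, n <> m -> itv_set (I n) `&` itv_set (I m) = set0) ->
  lc_cvg (fun n => itv_len (I n)) (lc_zero R) ->
  outer_measurable (A `\` \bigcup_n itv_set (I n)) /\
  exists (M : nat -> LC R) (L : LC R),
    (forall k : nat, Mu_is (A `\` \bigcup_(n in [set n : nat | (n <= k)%N]) itv_set (I n)) (M k)) /\
    lc_cvg M L /\
    Mu_is (A `\` \bigcup_n itv_set (I n)) L.
Proof.
Local Open Scope ring_scope.
Local Open Scope order_scope.
Local Open Scope classical_set_scope.

move=> [m0 hm0] _ /cvP hl.
have hA : is_inf (Sig A) m0 by apply/is_infP.
pose Ak k := A `\` \bigcup_(n in [set n : nat | (n <= k)%N]) itv_set (I n).
pose B := A `\` \bigcup_n itv_set (I n).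
have Akm : forall k, exists mk, is_inf (Sig (Ak k)) mk.
  elim => [|k [mk hk]].
    by rewrite /Ak Ak_0; apply: fin_lemma hA.
  by rewrite /Ak Ak_step; apply: fin_lemma hk.
have [M hM] := choice Akm.
pose len n := itv_len (I n).
have [Sf hSf] := ser_ex hl.
pose T k := Sf - lc_psum len k.+1.
have hT : forall k, Sig [set x | exists n, (k < n)%N /\ itv_set (I n) x] (T k).
  move=> k; exists (fun n => I (n + k.+1)%N); split.
    move=> x [n [kn hn]]; exists (n - k.+1)%N => //; by rewrite subnK.
  exact/serP/(ser_shift k.+1 hSf).
have T0 : forall q, exists K, forall k, (K <= k)%N -> agr q (T k) 0.
  move=> q; have [N HN] := hSf q; exists N => k kN.
  rewrite -(subrr Sf); apply: agrB; first exact: agr_refl.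
  by apply: HN; exact: leq_trans kN (leqnSn _).
have BA : forall k, B `<=` Ak k.
  by move=> k x [Ax nU]; split => // -[n _ hn]; apply: nU; exists n.
have low : forall k y, Sig B y -> M k - T k <= y.
  move=> k y Sy; have := Sig_merge Sy (hT k).
  have sub : Ak k `<=` B `|` [set x | exists n, (k < n)%N /\ itv_set (I n) x].
    move=> x [Ax nU]; case: (pselect (exists n, itv_set (I n) x)) => [[n hn]|nx].
      right; exists n; split => //; rewrite ltnNge; apply/negP => nk.
      by apply: nU; exists n.
    by left; split => // -[n _ hn]; apply: nx; exists n.
  by move=> /(Sig_anti sub) /(hM k).1; rewrite lc_ler_subl.
have [L hL] : exists L, is_inf (Sig B) L.
  apply: inf_ex => q; have [K HK] := T0 q.
  have [s [Ss as_]] := inf_approx (hM K) q.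
  exists (M K - T K), s; split; [|split].
  - exact: low.
  - exact: Sig_anti (BA K) Ss.
  - rewrite -(subr0 s); apply: agrB; first exact: agr_sym.
    exact: HK.
split; first by exists L; apply/is_infP.
exists M, L; split; first by move=> k; apply/is_infP; exact: hM.
split; last by apply/is_infP; exact: hL.
apply/cvP => q; have [K HK] := T0 q; exists K => k kK.
have h1 : M k - T k <= L by apply: hL.2 => y; apply: low.
have h2 : L <= M k by apply: (hM k).2 => y Sy; apply: hL.1; apply: Sig_anti (BA k) Sy.
have a : agr q (M k - T k) (M k).
  by rewrite -{2}(subr0 (M k)); apply: agrB; [exact: agr_refl|apply: HK].
exact: agr_sym (agr_trans (sand h1 h2 a) a).
Qed.
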